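(* Let $r,k$ be positive integers. The number of $r$-proper permutations $\pi\colon[k]\to[k]$ is at most $2^{(r+\log r)k}$.
   Context: $[k]=\{1,\dots,k\}$. A permutation $\pi\colon[k]\to[k]$ is called $r$-proper if for every $j\in[k]$, $|\{\ell\in[k]:\ \ell\le j,\ \pi(\ell)\ge j-1\}|\le r$. $\log$ is base $2$. *)

(* Defs.v *)
From mathcomp Require Import all_boot all_fingroup.
From Stdlib Require Import Reals.
Set Implicit Arguments. Unset Strict Implicit. Unset Printing Implicit Defensive.

(* [k] = {1,...,k} is modelled by 'I_k = {0,...,k-1}; the element l : 'I_k
   stands for l.+1 in [k], and a permutation p of 'I_k stands for the
   permutation  l.+1 |-> (p l).+1  of [k]. *)

Definition r_proper (r k : nat) (p : {perm 'I_k}) : bool :=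
  [forall j : 'I_k,
     #|[set l : 'I_k | (l.+1 <= j.+1) && (j.+1 - 1 <= (p l).+1)]| <= r].

Definition log2 (x : R) : R := (ln x / ln 2)%R.

(* Main.v *)
Require Import Defs.
From mathcomp Require Import all_boot all_fingroup zify.
Set Implicit Arguments. Unset Strict Implicit. Unset Printing Implicit Defensive.
Section Branch.
Variables (T X : finType) (S : {set T}) (code : T -> nat -> X) (n : nat) (c : nat -> nat).
Definition agree i (p p0 : T) := [forall j : 'I_n, (j < i) ==> (code p j == code p0 j)].

Lemma agreeP i p p0 : reflect (forall j, j < n -> j < i -> code p j = code p0 j) (agree i p p0).
Proof.
apply: (iffP forallP) => [H j jn ji | H j].
  by have /implyP/(_ ji)/eqP := H (Ordinal jn).
by apply/implyP => ji; apply/eqP; apply: H.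
Qed.

Hypothesis inj : forall p p0, p0 \in S -> p \in S -> agree n p p0 -> p = p0.
Hypothesis br : forall i p0, i < n -> p0 \in S ->
  #|[set code p i | p in [set p in S | agree i p p0]]| <= c i.

Lemma branch_aux m : forall i p0, i + m = n -> p0 \in S ->
  #|[set p in S | agree i p p0]| <= \prod_(i <= j < n) c j.
Proof.
elim: m => [|m IH] i p0 Hi Hp0.
  rewrite addn0 in Hi; subst i; rewrite big_geq //.
  rewrite -(cards1 p0); apply: subset_leq_card; apply/subsetP => p.
  by rewrite !inE => /andP [pS ag]; rewrite (inj Hp0 pS ag).
have lin : i < n by lia.
rewrite big_ltn //.
set Y := [set code p i | p in [set p in S | agree i p p0]].
rewrite -sum1_card (partition_big (fun p => code p i) (mem Y)); last first.
  by move=> p Hp; apply/imsetP; exists p.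
apply: leq_trans (_ : \sum_(y in Y) \prod_(i.+1 <= j < n) c j <= _); last first.
  by rewrite sum_nat_const leq_mul2r br ?orbT.
apply: leq_sum => y _.
case: (pickP [pred p | (p \in [set p in S | agree i p p0]) && (code p i == y)]) => [p1 /andP [Hp1 /eqP Hy] | none]; last first.
  by rewrite big_pred0 // => p; have := none p.
apply: leq_trans (IH i.+1 p1 _ _); last 2 first.
- lia.
- by move: Hp1; rewrite inE => /andP [].
rewrite sum1_card; apply: subset_leq_card; apply/subsetP => p.
move: Hp1; rewrite !inE => /andP [_ /agreeP ag1].
move=> H; move: H; rewrite unfold_in /= inE => /andP [/andP [pS /agreeP ag] /eqP cy].
rewrite pS /=; apply/agreeP => j jn ji.
case: (ltngtP j i) => [ji' | | ->]; last by rewrite cy Hy.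
  by rewrite ag // ag1.
lia.
Qed.

Lemma branch : #|S| <= \prod_(0 <= j < n) c j.
Proof.
case: (set_0Vmem S) => [-> | [p0 Hp0]]; first by rewrite cards0.
have H := @branch_aux n 0 p0 (add0n n) Hp0.
apply: leq_trans H.
apply: subset_leq_card; apply/subsetP => p pS; rewrite inE pS /=.
by apply/agreeP.
Qed.
End Branch.

Section Code.
Variables (k : nat).
Implicit Types (p : {perm 'I_k}).

Definition uc p (t : nat) : option 'I_k :=
  if insub t is Some L then (if p L + 2 <= L then Some (p L) else None) else None.
Definition wc p (t : nat) : option 'I_k :=
  if insub t is Some V then (if (p^-1)%g V <= t.+1 then Some ((p^-1)%g V) else None) else None.
Definition code p (i : nat) := if odd i then wc p i./2 else uc p (i./2).+1.

Lemma ucE p (L : 'I_k) : uc p L = if p L + 2 <= L then Some (p L) else None.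
Proof. by rewrite /uc valK. Qed.
Lemma wcE p (V : 'I_k) : wc p V = if (p^-1)%g V <= V.+1 then Some ((p^-1)%g V) else None.
Proof. by rewrite /wc valK. Qed.
Lemma code_even p s : code p s.*2 = uc p s.+1.
Proof. by rewrite /code odd_double doubleK. Qed.
Lemma code_odd p s : code p s.*2.+1 = wc p s.
Proof. by rewrite /code /= odd_double /= uphalf_double. Qed.
Lemma code_L p (L : 'I_k) : 0 < L -> code p (L.-1).*2 = uc p L.
Proof. by move=> H; rewrite code_even prednK. Qed.

Lemma code_inj p p0 : (forall j, j < k.*2 -> code p j = code p0 j) -> p = p0.
Proof.
move=> ag; apply/permP => L.
have Lk := ltn_ord L.
case: (leqP (p L + 2) L) => H.
  have := ag (L.-1).*2 ltac:(lia).
  rewrite !code_L; try lia.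
  rewrite !ucE H; case: ifP => // _ [] ->; done.
have := ag (nat_of_ord (p L)).*2.+1 ltac:(have HH := ltn_ord (p L); lia).
rewrite !code_odd !wcE permK.
rewrite (_ : L <= (p L).+1); last by lia.
case: ifP => // _ [] E.
by rewrite {2}E permKV.
Qed.


Lemma card_lt (m : nat) : m <= k -> #|[set v : 'I_k | v < m]| = m.
Proof.
move=> H.
have inj : injective (widen_ord H) by move=> x y /(congr1 val) /= /val_inj.
rewrite -[RHS]card_ord -(card_imset (mem 'I_m) inj).
apply: eq_card => v; rewrite !inE.
apply/idP/imsetP => [vm | [x _ ->]]; last by rewrite /= ltn_ord.
by exists (Ordinal vm) => //; apply: val_inj.
Qed.

Lemma Dbound r p0 (J : 'I_k) : r_proper r p0 -> 0 < J ->
  #|[set v : 'I_k | (v + 2 <= J) && (J <= (p0^-1)%g v)]| + 1 <= r.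
Proof.
move=> /forallP /(_ J) HB J0.
set j := nat_of_ord J.
have jk : j <= k by have := ltn_ord J; lia.
set D := [set v : 'I_k | _].
set X := [set l : 'I_k | (l < j) && (p0 l + 2 <= j)].
set Y := [set l : 'I_k | (l < j) && (j <= (p0 l).+1)].
have XY : #|X| + #|Y| = j.
  rewrite -(card_lt jk) -(cardsID [set l : 'I_k | p0 l + 2 <= j] [set v : 'I_k | v < j]).
  congr (_ + _); apply: eq_card => l; rewrite !inE /=.
    by [].
  by case: (l < j) => //=; apply/negP/idP; lia.
have XD : #|D| + #|X| = j.-1.
  have j1k : j.-1 <= k by lia.
  rewrite -(card_lt j1k) -(cardsID [set v : 'I_k | (p0^-1)%g v < j] [set v : 'I_k | v < j.-1]) addnC.
  congr (_ + _).
    rewrite -(card_imset _ (@perm_inj _ p0)) (can_imset_pre _ (permK p0)).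
    apply: eq_card => v; rewrite !inE /= permKV.
    apply/idP/idP => /andP [a b]; apply/andP; split; lia.
  apply: eq_card => v; rewrite !inE /=.
  apply/idP/idP.
    move=> /andP [a b]; apply/andP; split; lia.
  move=> /andP [/negP a b]; apply/andP; split; lia.
have YB : #|Y| <= r.
  apply: leq_trans HB; apply: subset_leq_card; apply/subsetP => l.
  rewrite !inE => /andP [a b]; apply/andP; split; lia.
lia.
Qed.


Lemma brA r p0 s : r_proper r p0 -> 0 < r -> s < k ->
  #|[set code p s.*2 | p in [set p : {perm 'I_k} | (p \in [set p | r_proper r p]) && agree code k.*2 s.*2 p p0]]| <= r.
Proof.
move=> Hp0 r0 sk.
case: (ltnP s.+1 k) => sk1; last first.
  apply: leq_trans (_ : #|[set None : option 'I_k]| <= r); last by rewrite cards1.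
  apply: subset_leq_card; apply/subsetP => x /imsetP [p _ ->].
  by rewrite code_even /uc insubN ?inE //; rewrite -leqNgt.
pose J := Ordinal sk1.
have J0 : 0 < J by [].
set Dset := [set v : 'I_k | (v + 2 <= J) && (J <= (p0^-1)%g v)].
apply: leq_trans (_ : #|None |: [set Some v | v in Dset]| <= r); last first.
  rewrite cardsU1 (card_imset _ (@Some_inj _)).
  apply: leq_trans (leq_add (leq_b1 _) (leqnn _)) _.
  by rewrite add1n -addn1 Dbound.
apply: subset_leq_card; apply/subsetP => x /imsetP [p Hp ->].
move: Hp; rewrite !inE => /andP [_ /agreeP ag].
rewrite code_even (_ : s.+1 = nat_of_ord J) // ucE.
case: ifP => HJ; last by rewrite eqxx.
apply/orP; right; apply/imsetP; exists (p J) => //.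
rewrite inE HJ /=.
move Ev: (p J) HJ => v HJ.
have Hq : ~~ ((p0^-1)%g v <= v.+1).
  have := ag (nat_of_ord v).*2.+1 ltac:(have HH := ltn_ord v; lia) ltac:(simpl in HJ; lia).
  rewrite !code_odd !wcE (_ : (p^-1)%g v = J); last by rewrite -Ev permK.
  rewrite ifF; last by apply/negbTE; rewrite -ltnNge; lia.
  by case: ifP.
rewrite leqNgt; apply/negP => Hlt.
move EL: ((p0^-1)%g v) Hq Hlt => L Hq Hlt.
have L0 : 0 < L by lia.
have := ag (L.-1).*2 ltac:(have HH := ltn_ord L; lia) ltac:(simpl in Hlt; lia).
have HL : p0 L = v by rewrite -EL permKV.
rewrite !code_L // !ucE HL.
rewrite [in RHS]ifT; last by lia.
case: ifP => // _ [] E; move: E; rewrite -Ev => /perm_inj E.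
by move: Hlt; rewrite E ltnn.
Qed.


Lemma brB r p0 s : r_proper r p0 -> 0 < r -> s < k ->
  #|[set code p s.*2.+1 | p in [set p : {perm 'I_k} | (p \in [set p | r_proper r p]) && agree code k.*2 s.*2.+1 p p0]]| <= r.+1.
Proof.
move=> Hp0 r0 sk.
pose V := Ordinal sk.
set E := [set l : 'I_k | (l <= s.+1) && (s <= p0 l)].
apply: leq_trans (_ : #|None |: [set Some l | l in E]| <= r.+1); last first.
  rewrite cardsU1 (card_imset _ (@Some_inj _)).
  apply: leq_trans (leq_add (leq_b1 _) (leqnn _)) _.
  rewrite add1n ltnS.
  case: (ltnP s.+1 k) => sk1.
    pose J := Ordinal sk1.
    move/forallP: Hp0 => /(_ J) HB.
    apply: leq_trans HB; apply: subset_leq_card; apply/subsetP => l.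
    rewrite /E !inE => /andP [a b]; apply/andP; split; rewrite /J /=; lia.
  apply: leq_trans (_ : #|[set (p0^-1)%g V]| <= r); last by rewrite cards1.
  apply: subset_leq_card; apply/subsetP => l.
  rewrite /E !inE => /andP [a b].
  have Hl : p0 l = V by apply: val_inj => /=; have := ltn_ord (p0 l); lia.
  by rewrite -Hl permK.
apply: subset_leq_card; apply/subsetP => x /imsetP [p Hp ->].
move: Hp; rewrite !inE => /andP [_ /agreeP ag].
rewrite code_odd (_ : wc p s = wc p V) // wcE.
case: ifP => HL; last by rewrite eqxx.
apply/orP; right; apply/imsetP; exists ((p^-1)%g V) => //.
move EL: ((p^-1)%g V) HL => L HL.
have HpL : p L = V by rewrite -EL permKV.
rewrite inE HL /=.
have u0 : ~~ (p0 L + 2 <= L).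
  case L0: (nat_of_ord L == 0); first by move/eqP: L0; lia.
  have := ag (L.-1).*2 ltac:(have HH := ltn_ord L; lia) ltac:(simpl in HL; lia).
  rewrite !code_L; last 2 first.
  - by rewrite lt0n L0.
  - by rewrite lt0n L0.
  rewrite !ucE HpL ifF; last by apply/negbTE; rewrite -ltnNge /=; simpl in HL; lia.
  by case: ifP.
rewrite leqNgt; apply/negP => Hlt.
move Ev: (p0 L) u0 Hlt => v u0 Hlt.
have := ag (nat_of_ord v).*2.+1 ltac:(have HH := ltn_ord v; lia) ltac:(lia).
rewrite !code_odd !wcE (_ : (p0^-1)%g v = L); last by rewrite -Ev permK.
rewrite [in RHS]ifT; last by lia.
case: ifP => // _ [] E1.
have : p L = v by rewrite -E1 permKV.
by rewrite HpL => Evv; move: Hlt; rewrite -Evv /= ltnn.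
Qed.

End Code.

Lemma prod_c r k : \prod_(0 <= j < k.*2) (if odd j then r.+1 else r) = (r * r.+1)^k.
Proof.
elim: k => [|k IH]; first by rewrite big_geq.
rewrite doubleS !big_nat_recr //= ?IH; try lia.
by rewrite odd_double /= expnS [RHS]mulnC mulnA.
Qed.

Lemma count_nat r k : 0 < r -> #|[set p : {perm 'I_k} | r_proper r p]| <= (r * r.+1)^k.
Proof.
move=> r0.
rewrite -prod_c.
apply: (@branch _ _ _ (@code k)).
  move=> p p0 Hp0 Hp /agreeP ag; apply: code_inj => j jk; exact: ag.
move=> i p0 ik Hp0.
rewrite inE in Hp0.
have H : {s | i = s.*2.+1} + {s | i = s.*2}.
  case Ho: (odd i); [left; exists i./2 | right; exists i./2];
    by rewrite -{1}(odd_double_half i) Ho.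
case: H => [[s Es]|[s Es]]; subst i.
  rewrite /= odd_double /=; apply: brB => //; lia.
rewrite odd_double; apply: brA => //; lia.
Qed.

Lemma count_nat2 r k : 0 < r -> 0 < k -> #|[set p : {perm 'I_k} | r_proper r p]| <= (r * 2^r)^k.
Proof.
move=> r0 k0; apply: leq_trans (count_nat k r0) _.
rewrite leq_exp2r // leq_mul2l ltn_expl ?orbT //.
Qed.

From Stdlib Require Import Reals Lra.

Lemma INR_expn a b : INR (expn a b) = (INR a ^ b)%R.
Proof. elim: b => [|b IH] //; rewrite expnS -multE mult_INR IH /=; ring. Qed.
Lemma INR_muln a b : INR (muln a b) = (INR a * INR b)%R.
Proof. by rewrite -multE mult_INR. Qed.

Theorem lemma10 (r k : nat) (hr : 0 < r) (hk : 0 < k) :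
  (INR #|[set p : {perm 'I_k} | r_proper r p]|
     <= Rpower 2 ((INR r + log2 (INR r)) * INR k))%R.
Proof.
have H := count_nat2 hr hk.
move/leP: H => H.
apply Rle_trans with (INR (expn (muln r (expn 2 r)) k)); first by apply le_INR.
rewrite INR_expn INR_muln INR_expn.
have rpos : (0 < INR r)%R by apply lt_0_INR; apply/ltP.
have l2 : (0 < ln 2)%R by rewrite -ln_1; apply ln_increasing; lra.
have p2 : (0 < INR 2 ^ r)%R by apply pow_lt; simpl; lra.
rewrite -Rpower_pow; last by apply Rmult_lt_0_compat.
unfold Rpower, log2.
rewrite ln_mult // ln_pow; last by simpl; lra.
right; f_equal; simpl.
replace (1 + 1)%R with 2%R by ring.
field; lra.
Qed.
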